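(* Under the standing assumptions, writing (R1) for $\mathscr{R}(A^*AB)=\mathscr{R}(B)$ and (R2) for $\mathscr{R}(CC^*B^* )=\mathscr{R}(B^* )$, the following hold. (57) $M^\dagger\in\{C^{-1}B^{(1)}A^{-1}\}$. (58) $M^\dagger\in\{C^{-1}B^{(1,2)}A^{-1}\}$. (59) $M^\dagger\in\{C^{-1}B^{(1,3)}A^{-1}\}\Leftrightarrow$ (R1). (60) $M^\dagger\in\{C^{-1}B^{(1,4)}A^{-1}\}\Leftrightarrow$ (R2). (61) $M^\dagger\in\{C^{-1}B^{(1,2,3)}A^{-1}\}\Leftrightarrow$ (R1). (62) $M^\dagger\in\{C^{-1}B^{(1,2,4)}A^{-1}\}\Leftrightarrow$ (R2). (63) $M^\dagger\in\{C^{-1}B^{(1,3,4)}A^{-1}\}\Leftrightarrow$ (R1) and (R2). (64) The following are equivalent: (i) $M^\dagger=C^{-1}B^\dagger A^{-1}$; (ii) (R1) and (R2); (iii) $\mathscr{R}(AA^*M)=\mathscr{R}(M)$ and $\mathscr{R}(C^*CM^* )=\mathscr{R}(M^* )$; (iv) $(A^*AB)(A^*AB)^\dagger=BB^\dagger$ and $(BCC^* )^\dagger(BCC^* )=B^\dagger B$; (v) $A^*ABB^*$ and $B^*BCC^*$ are both EP; (vi) $AA^*MM^*$ and $M^*MC^*C$ are both EP.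
   Context: Standing assumptions: $m,n\ge1$; $A\in\mathbb{C}^{m\times m}$ and $C\in\mathbb{C}^{n\times n}$ are nonsingular; $B\in\mathbb{C}^{m\times n}$; $M=ABC$. For a complex matrix $X$, $X^*$ is its conjugate transpose, $r(X)$ its rank and $\mathscr{R}(X)$ its column space. A square matrix $X$ is called EP (range Hermitian) if $\mathscr{R}(X^* )=\mathscr{R}(X)$. For $X\in\mathbb{C}^{p\times q}$, a matrix $G\in\mathbb{C}^{q\times p}$ is called an $\{i,\ldots,j\}$-generalized inverse of $X$ (written $X^{(i,\ldots,j)}$) if it satisfies the equations numbered $i,\ldots,j$ among the four Penrose equations (i) $XGX=X$, (ii) $GXG=G$, (iii) $(XG)^*=XG$, (iv) $(GX)^*=GX$; $\{X^{(i,\ldots,j)}\}$ denotes the set of all such $G$. The Moore–Penrose inverse $X^\dagger$ is the unique matrix satisfying all four equations. For a type $(k,\ldots,l)$, $\{C^{-1}B^{(k,\ldots,l)}A^{-1}\}:=\{C^{-1}GA^{-1}: G\in\{B^{(k,\ldots,l)}\}\}$. *)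

(* Defs.v *)
(* Complex matrices are modelled over an arbitrary
   numClosedFieldType R (e.g. algC), which carries complex conjugation. *)
From HB Require Import structures.
From mathcomp Require Import all_boot all_order all_algebra.
From Stdlib Require Import ClassicalEpsilon.
Set Implicit Arguments. Unset Strict Implicit. Unset Printing Implicit Defensive.
Import Order.TTheory GRing.Theory Num.Theory.
Local Open Scope ring_scope.

Definition ctr (R : numClosedFieldType) (p q : nat) (X : 'M[R]_(p, q)) : 'M[R]_(q, p) :=
  (map_mx (fun x => x^*) X)^T.

(* column space equality R(X) = R(Y): column space of X = row space of X^T *)
Definition colspace_eq (R : numClosedFieldType) (p q r : nat)
  (X : 'M[R]_(p, q)) (Y : 'M[R]_(p, r)) : Prop := (X^T == Y^T)%MS.

Definition EP (R : numClosedFieldType) (p : nat) (X : 'M[R]_p) : Prop :=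
  colspace_eq (ctr X) X.

Definition penrose (R : numClosedFieldType) (p q : nat) (i : nat)
  (X : 'M[R]_(p, q)) (G : 'M[R]_(q, p)) : Prop :=
  match i with
  | 1%N => X *m G *m X = X
  | 2%N => G *m X *m G = G
  | 3%N => ctr (X *m G) = X *m G
  | 4%N => ctr (G *m X) = G *m X
  | _ => True
  end.

Definition is_ginv (R : numClosedFieldType) (p q : nat) (s : seq nat)
  (X : 'M[R]_(p, q)) (G : 'M[R]_(q, p)) : Prop :=
  forall i, i \in s -> penrose i X G.

Definition mp_inv (R : numClosedFieldType) (p q : nat) (X : 'M[R]_(p, q)) : 'M[R]_(q, p) :=
  epsilon (inhabits 0) (fun G => is_ginv [:: 1; 2; 3; 4]%N X G).

Definition in_CBA (R : numClosedFieldType) (m n : nat) (s : seq nat)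
  (A : 'M[R]_m) (B : 'M[R]_(m, n)) (C : 'M[R]_n) (Y : 'M[R]_(n, m)) : Prop :=
  exists G : 'M[R]_(n, m), is_ginv s B G /\ Y = invmx C *m G *m invmx A.

(* Main.v *)
Require Import Defs.
From HB Require Import structures.
From mathcomp Require Import all_boot all_order all_algebra zify.
From Stdlib Require Import ClassicalEpsilon.
Import Order.TTheory GRing.Theory Num.Theory.
Local Open Scope ring_scope.
Set Implicit Arguments. Unset Strict Implicit. Unset Printing Implicit Defensive.

Section Ctr.
Variable R : numClosedFieldType.

Lemma ctrK p q (X : 'M[R]_(p, q)) : ctr (ctr X) = X.
Proof. by apply/matrixP=> i j; rewrite !mxE conjCK. Qed.

Lemma ctrM p q r (X : 'M[R]_(p, q)) (Y : 'M[R]_(q, r)) :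
  ctr (X *m Y) = ctr Y *m ctr X.
Proof. by rewrite /ctr map_mxM trmx_mul. Qed.

Lemma ctr1 p : ctr (1%:M : 'M[R]_p) = 1%:M.
Proof. by rewrite /ctr map_mx1 trmx1. Qed.

Lemma ctr_eq0 p q (X : 'M[R]_(p, q)) : ctr X *m X = 0 -> X = 0.
Proof.
move=> H; apply/matrixP=> i j; rewrite mxE.
have /matrixP/(_ j j) := H; rewrite !mxE => H1.
have NN : forall k : 'I_p, true -> 0 <= ctr X j k * X k j.
  by move=> k _; rewrite !mxE mulrC; exact: mul_conjC_ge0.
have /(_ i isT)/eqP := psumr_eq0P NN H1.
by rewrite !mxE mulrC mul_conjC_eq0 => /eqP.
Qed.

Lemma ctr_inv_unit p (A : 'M[R]_p) : A \in unitmx ->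
  ctr A \in unitmx /\ ctr (invmx A) = invmx (ctr A).
Proof.
move=> Au; have H : ctr (invmx A) *m ctr A = 1%:M by rewrite -ctrM mulmxV // ctr1.
have [U1 U2] := mulmx1_unit H; split => //.
by rewrite -[LHS](mulmxK U2) H mul1mx.
Qed.

Lemma ctr_unit p (A : 'M[R]_p) : A \in unitmx -> ctr A \in unitmx.
Proof. by case/ctr_inv_unit. Qed.

Lemma ctr_inv p (A : 'M[R]_p) : A \in unitmx -> ctr (invmx A) = invmx (ctr A).
Proof. by case/ctr_inv_unit. Qed.

Lemma rank_ctr p q (X : 'M[R]_(p, q)) : \rank (ctr X) = \rank X.
Proof. by rewrite /ctr mxrank_tr (mxrank_map (@Num.conj R)). Qed.

Lemma ctr_eq0r p q (X : 'M[R]_(p, q)) : X *m ctr X = 0 -> X = 0.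
Proof.
move=> H; have H0 : ctr X = 0 by apply: ctr_eq0; rewrite ctrK.
by rewrite -[X]ctrK H0; apply/matrixP=> i j; rewrite !mxE conjC0.
Qed.

Lemma rank_gram p q (X : 'M[R]_(p, q)) : \rank (X *m ctr X) = \rank X.
Proof.
have E : (kermx (X *m ctr X) == kermx X)%MS.
  apply/andP; split; apply/sub_kermxP.
    apply: ctr_eq0r; rewrite ctrM mulmxA -(mulmxA _ X) mulmx_ker mul0mx //.
  by rewrite mulmxA mulmx_ker mul0mx.
have := mxrank_ker (X *m ctr X); rewrite (eqmxP E) mxrank_ker.
have := rank_leq_row X; have := rank_leq_row (X *m ctr X); lia.
Qed.
End Ctr.

Section CS.
Variable R : numClosedFieldType.

Lemma cs_incl p q r (X : 'M[R]_(p, q)) (Y : 'M[R]_(p, r)) :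
  colspace_eq X Y -> exists U, X = Y *m U.
Proof.
move=> /andP[/submxP[D HD] _]; exists D^T.
by rewrite -[X]trmxK HD trmx_mul trmxK.
Qed.

Lemma cs_sub p q r (X : 'M[R]_(p, q)) (Y : 'M[R]_(p, r)) U :
  X = Y *m U -> (X^T <= Y^T)%MS.
Proof. by move=> ->; rewrite trmx_mul submxMl. Qed.

Lemma cs_of p q r (X : 'M[R]_(p, q)) (Y : 'M[R]_(p, r)) U V :
  X = Y *m U -> Y = X *m V -> colspace_eq X Y.
Proof. by move=> H1 H2; apply/andP; split; [apply: cs_sub H1|apply: cs_sub H2]. Qed.

Lemma cs_rank p q r (X : 'M[R]_(p, q)) (Y : 'M[R]_(p, r)) U :
  \rank X = \rank Y -> X = Y *m U -> colspace_eq X Y.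
Proof.
move=> Hr H; have S := cs_sub H.
have [_ E] := mxrank_leqif_eq S; by rewrite /colspace_eq -E !mxrank_tr Hr.
Qed.

Lemma cs_sym p q r (X : 'M[R]_(p, q)) (Y : 'M[R]_(p, r)) :
  colspace_eq X Y -> colspace_eq Y X.
Proof. by move=> /eqmxP H; apply/eqmxP; apply: eqmx_sym. Qed.

Lemma cs_trans p q r s (X : 'M[R]_(p, q)) (Y : 'M[R]_(p, r)) (Z : 'M[R]_(p, s)) :
  colspace_eq X Y -> colspace_eq Y Z -> colspace_eq X Z.
Proof. by move=> /eqmxP H1 /eqmxP H2; apply/eqmxP; apply: eqmx_trans H1 H2. Qed.

Lemma cs_rank_eq p q r (X : 'M[R]_(p, q)) (Y : 'M[R]_(p, r)) :
  colspace_eq X Y -> \rank X = \rank Y.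
Proof. by move=> /eqmxP H; rewrite -mxrank_tr H mxrank_tr. Qed.

Lemma rank_unitr p q (X : 'M[R]_(p, q)) (W : 'M[R]_q) :
  W \in unitmx -> \rank (X *m W) = \rank X.
Proof. by move=> Wu; rewrite mxrankMfree // row_free_unit. Qed.

Lemma rank_unitl p q (X : 'M[R]_(p, q)) (W : 'M[R]_p) :
  W \in unitmx -> \rank (W *m X) = \rank X.
Proof.
by move=> Wu; rewrite -mxrank_tr trmx_mul rank_unitr ?mxrank_tr // unitmx_tr.
Qed.
End CS.

Section MP.
Variable R : numClosedFieldType.

Lemma ginv_cons p q i s (X : 'M[R]_(p, q)) G :
  is_ginv (i :: s) X G <-> penrose i X G /\ is_ginv s X G.
Proof.
split.
  by move=> H; split; [apply: H; rewrite inE eqxx | move=> k ks; apply: H; rewrite inE ks orbT].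
by case=> H1 H2 k; rewrite inE => /orP[/eqP->|/H2].
Qed.

Lemma ginv_nil p q (X : 'M[R]_(p, q)) G : is_ginv [::] X G.
Proof. by []. Qed.

Lemma mp_exists p q (X : 'M[R]_(p, q)) : exists G, is_ginv [:: 1; 2; 3; 4]%N X G.
Proof.
set r := \rank X.
set F := col_base X; set Gb := row_base X.
have XE : X = F *m Gb by rewrite mulmx_base.
have HG : row_free Gb by apply: row_base_free.
have HF : row_full F by apply: col_base_full.
clearbody F Gb; move: F Gb XE HG HF; clear r; move: (\rank X) => k F Gb XE HG HF.
pose S := Gb *m ctr Gb; pose T := ctr F *m F.
have Su : S \in unitmx.
  by rewrite -row_free_unit /row_free rank_gram.
have Tu : T \in unitmx.
  rewrite -row_free_unit /row_free /T -{2}[F]ctrK rank_gram rank_ctr.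
  exact: HF.
have SH : ctr S = S by rewrite /S ctrM ctrK.
have TH : ctr T = T by rewrite /T ctrM ctrK.
pose Y := ctr Gb *m invmx S *m invmx T *m ctr F.
have XY : X *m Y = F *m invmx T *m ctr F.
  by rewrite {1}XE /Y !mulmxA -(mulmxA F Gb) -/S mulmxK.
have YX : Y *m X = ctr Gb *m invmx S *m Gb.
  by rewrite {1}XE /Y !mulmxA -(mulmxA _ (ctr F) F) -/T mulmxKV.
exists Y; do !(apply/ginv_cons; split); last exact: ginv_nil.
- by rewrite /= XY XE -!mulmxA (mulmxA (ctr F)) -/T mulKmx.
- by rewrite /= YX /Y -!mulmxA (mulmxA Gb) -/S mulKmx.
- by rewrite /= XY !ctrM ctrK (ctr_inv Tu) TH !mulmxA.
- by rewrite /= YX !ctrM ctrK (ctr_inv Su) SH !mulmxA.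
Qed.

Lemma ginv4P p q (X : 'M[R]_(p, q)) G : is_ginv [:: 1; 2; 3; 4]%N X G <->
  [/\ X *m G *m X = X, G *m X *m G = G, ctr (X *m G) = X *m G & ctr (G *m X) = G *m X].
Proof.
split.
  by move=> /ginv_cons[h1 /ginv_cons[h2 /ginv_cons[h3 /ginv_cons[h4 _]]]].
by case=> h1 h2 h3 h4; do !(apply/ginv_cons; split) => //; exact: ginv_nil.
Qed.

Lemma mp_spec p q (X : 'M[R]_(p, q)) : is_ginv [:: 1; 2; 3; 4]%N X (mp_inv X).
Proof. rewrite /mp_inv; apply: epsilon_spec; exact: mp_exists. Qed.

Lemma mp1 p q (X : 'M[R]_(p, q)) : X *m mp_inv X *m X = X.
Proof. by case/ginv4P: (mp_spec X). Qed.
Lemma mp2 p q (X : 'M[R]_(p, q)) : mp_inv X *m X *m mp_inv X = mp_inv X.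
Proof. by case/ginv4P: (mp_spec X). Qed.
Lemma mp3 p q (X : 'M[R]_(p, q)) : ctr (X *m mp_inv X) = X *m mp_inv X.
Proof. by case/ginv4P: (mp_spec X). Qed.
Lemma mp4 p q (X : 'M[R]_(p, q)) : ctr (mp_inv X *m X) = mp_inv X *m X.
Proof. by case/ginv4P: (mp_spec X). Qed.

Lemma mp_uniq p q (X : 'M[R]_(p, q)) G :
  is_ginv [:: 1; 2; 3; 4]%N X G -> G = mp_inv X.
Proof.
have : forall G1 G2, is_ginv [:: 1; 2; 3; 4]%N X G1 -> is_ginv [:: 1; 2; 3; 4]%N X G2 ->
   G1 = G1 *m X *m G2 /\ G2 = G1 *m X *m G2.
  move=> G1 G2 /ginv4P[a1 a2 a3 a4] /ginv4P[b1 b2 b3 b4]; split.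
    rewrite -{1}a2 -mulmxA -a3 ctrM -[in ctr X]b1 ctrM b3 -!mulmxA.
    by rewrite (mulmxA (ctr G1)) -ctrM a3 !mulmxA a2.
  rewrite -{1}b2 -b4 ctrM -[in ctr X]a1 -(mulmxA X G1 X) ctrM a4 -!mulmxA.
  by rewrite (mulmxA (ctr X)) -ctrM b4 b2 mulmxA.
move=> H HG; have [E1 E2] := H G (mp_inv X) HG (mp_spec X).
by rewrite E1 -E2.
Qed.
End MP.

Section Main.
Variable R : numClosedFieldType.

Lemma conj_eq p q (W : 'M[R]_p) (V : 'M[R]_q) (X Y : 'M[R]_(p, q)) :
  W \in unitmx -> V \in unitmx -> W *m X *m V = W *m Y *m V -> X = Y.
Proof.
move=> Wu Vu /(congr1 (mulmx (invmx W))); rewrite -!mulmxA !mulKmx //.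
by move/(congr1 (mulmx^~ (invmx V))); rewrite !mulmxK.
Qed.

Variables (m n : nat) (A : 'M[R]_m) (B : 'M[R]_(m, n)) (C : 'M[R]_n).
Hypotheses (Au : A \in unitmx) (Cu : C \in unitmx).

Lemma pen3_iff (M : 'M[R]_(m, n)) (P : 'M[R]_(n, m)) :
  M = A *m B *m C -> is_ginv [:: 1; 2; 3; 4]%N M P ->
  ctr (B *m (C *m P *m A)) = B *m (C *m P *m A) <-> colspace_eq (ctr A *m A *m B) B.
Proof.
move=> hM /ginv4P[p1 p2 p3 p4].
have hB : B = invmx A *m M *m invmx C by rewrite hM -!mulmxA mulKmx // mulmxV // mulmx1.
have BGE : B *m (C *m P *m A) = invmx A *m (M *m P) *m A.
  by rewrite hB !mulmxA mulmxKV.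
have [Q hQ] : exists Q, Q = M *m P by exists (M *m P).
rewrite -hQ in BGE p3; have QM : Q *m M = M by rewrite hQ.
rewrite BGE; set H := A *m ctr A.
have Hu : H \in unitmx by rewrite unitmx_mul Au ctr_unit.
have HH : ctr H = H by rewrite /H ctrM ctrK.
have AAu : ctr A *m A \in unitmx by rewrite unitmx_mul Au ctr_unit.
have step1 : ctr (invmx A *m Q *m A) = invmx A *m Q *m A <-> H *m Q = Q *m H.
  rewrite !ctrM (ctr_inv Au) p3; split.
    move=> E; have := congr1 (fun Z => A *m Z *m ctr A) E; rewrite /=.
    rewrite !mulmxA mulmxKV ?ctr_unit // mulmxV // mul1mx => ->; by rewrite /H ?mulmxA.
  move=> K; apply: (conj_eq Au (ctr_unit Au)).
  by rewrite !mulmxA mulmxKV ?ctr_unit // -/H K mulmxV // mul1mx /H !mulmxA.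
rewrite step1 /colspace_eq; split.
- move=> K.
  have E : H *m M = M *m (P *m H *m M) by rewrite -{1}QM mulmxA K hQ !mulmxA.
  apply: (@cs_rank _ _ _ _ _ _ (C *m (P *m H *m M) *m invmx C)).
    by rewrite rank_unitl.
  apply: (conj_eq Au Cu); rewrite !mulmxA -/H.
  by rewrite mulmxKV // -(mulmxA H A B) -(mulmxA H) -!hM E !mulmxA.
- case/cs_incl=> U hU.
  have E : H *m M = M *m (invmx C *m U *m C).
    by rewrite hM /H !mulmxA -(mulmxA A (ctr A) A) -(mulmxA A (ctr A *m A) B) hU mulmxK // !mulmxA.
  have E2 : Q *m H *m Q = H *m Q.
    by rewrite hQ !mulmxA -(mulmxA (M *m P) A (ctr A)) -/H -(mulmxA (M *m P) H M) E mulmxA p1 !mulmxA.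
  have E3 := congr1 (fun Z => ctr Z) E2; rewrite /= !ctrM p3 ctrK -/H in E3.
  by rewrite -E2 -mulmxA.
Qed.
End Main.

Section More.
Variable R : numClosedFieldType.

Lemma ginv4_ctr p q (X : 'M[R]_(p, q)) G : is_ginv [:: 1; 2; 3; 4]%N X G ->
  is_ginv [:: 1; 2; 3; 4]%N (ctr X) (ctr G).
Proof.
move=> /ginv4P[h1 h2 h3 h4]; apply/ginv4P; split.
- by rewrite -!ctrM mulmxA h1.
- by rewrite -!ctrM mulmxA h2.
- by rewrite -ctrM ctrK h4.
- by rewrite -ctrM ctrK h3.
Qed.

Lemma cs_iff_incl p q r (X : 'M[R]_(p, q)) (Y : 'M[R]_(p, r)) :
  \rank X = \rank Y -> (colspace_eq X Y <-> exists U, X = Y *m U).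
Proof. by move=> Hr; split; [apply: cs_incl | case=> U; apply: cs_rank]. Qed.

Lemma proj_left p q r (X : 'M[R]_(p, q)) (Y : 'M[R]_(p, r)) :
  X *m mp_inv X = Y *m mp_inv Y <-> colspace_eq X Y.
Proof.
split=> [E|].
  apply: (@cs_of _ _ _ _ _ _ (mp_inv Y *m X) (mp_inv X *m Y)).
    by rewrite mulmxA -E mp1.
  by rewrite mulmxA E mp1.
case/andP=> /submxP[D1 h1] /submxP[D2 h2].
have e1 : X = Y *m D1^T by rewrite -[X]trmxK h1 trmx_mul trmxK.
have e2 : Y = X *m D2^T by rewrite -[Y]trmxK h2 trmx_mul trmxK.
have f1 : Y *m mp_inv Y *m (X *m mp_inv X) = X *m mp_inv X.
  by rewrite {1}e1 !mulmxA mp1 -e1.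
have f2 : X *m mp_inv X *m (Y *m mp_inv Y) = Y *m mp_inv Y.
  by rewrite {1}e2 !mulmxA mp1 -e2.
have := congr1 (fun Z => ctr Z) f1; rewrite /= ctrM !mp3 f2 => ->.
by [].
Qed.

Lemma proj_right p q r (X : 'M[R]_(p, q)) (Y : 'M[R]_(r, q)) :
  mp_inv X *m X = mp_inv Y *m Y <-> colspace_eq (ctr X) (ctr Y).
Proof.
split=> [E|].
  apply: (@cs_of _ _ _ _ _ _ (ctr (X *m mp_inv Y)) (ctr (Y *m mp_inv X))).
    by rewrite -ctrM -mulmxA -E mulmxA mp1.
  by rewrite -ctrM -mulmxA E mulmxA mp1.
case/andP=> /submxP[D1 h1] /submxP[D2 h2].
have e1 : X = ctr (D1^T) *m Y.
  by rewrite -[X]ctrK -[ctr X]trmxK h1 trmx_mul trmxK ctrM ctrK.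
have e2 : Y = ctr (D2^T) *m X.
  by rewrite -[Y]ctrK -[ctr Y]trmxK h2 trmx_mul trmxK ctrM ctrK.
have f1 : mp_inv X *m X *m (mp_inv Y *m Y) = mp_inv X *m X.
  by rewrite {2}e1 -!mulmxA (mulmxA Y) mp1 -e1.
have f2 : mp_inv Y *m Y *m (mp_inv X *m X) = mp_inv Y *m Y.
  by rewrite {2}e2 -!mulmxA (mulmxA X) mp1 -e2.
have := congr1 (fun Z => ctr Z) f1; rewrite /= ctrM !mp4 f2 => ->.
by [].
Qed.

Lemma EP_ctr p (X : 'M[R]_p) : EP X <-> EP (ctr X).
Proof. by rewrite /EP ctrK; split; apply: cs_sym. Qed.

Lemma EP_lemma p q (W : 'M[R]_p) (Y : 'M[R]_(p, q)) : W \in unitmx ->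
  EP (W *m Y *m ctr Y) <-> colspace_eq (W *m Y) Y.
Proof.
move=> Wu.
have c1 : colspace_eq (ctr (W *m Y *m ctr Y)) Y.
  apply: (@cs_rank _ _ _ _ _ _ (ctr Y *m ctr W)).
    by rewrite !ctrM ctrK mulmxA rank_unitr ?ctr_unit // rank_gram.
  by rewrite !ctrM ctrK mulmxA.
have c2 : colspace_eq (W *m Y *m ctr Y) (W *m Y).
  apply: (@cs_rank _ _ _ _ _ _ (ctr Y)) => //.
  by rewrite -mulmxA !rank_unitl // rank_gram.
rewrite /EP; split=> H.
  apply: cs_sym; apply: cs_trans (cs_sym c1) (cs_trans H c2).
apply: cs_trans c1 _; apply: cs_trans (cs_sym H) (cs_sym c2).
Qed.
End More.

Section Main2.
Variable R : numClosedFieldType.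
Variables (m n : nat) (A : 'M[R]_m) (B : 'M[R]_(m, n)) (C : 'M[R]_n).
Hypotheses (Au : A \in unitmx) (Cu : C \in unitmx).

Lemma PGE (P : 'M[R]_(n, m)) : P = invmx C *m (C *m P *m A) *m invmx A.
Proof. by rewrite -!mulmxA mulKmx // mulmxV // mulmx1. Qed.

Lemma inCBA_iff s (P : 'M[R]_(n, m)) :
  in_CBA s A B C P <-> is_ginv s B (C *m P *m A).
Proof.
split.
  case=> G [HG ->]; suff -> : C *m (invmx C *m G *m invmx A) *m A = G by [].
  by rewrite -!mulmxA mulKVmx // mulmxA mulmxKV.
move=> H; exists (C *m P *m A); split => //; exact: PGE.
Qed.

Lemma pen12 (M : 'M[R]_(m, n)) (P : 'M[R]_(n, m)) :
  M = A *m B *m C -> is_ginv [:: 1; 2; 3; 4]%N M P ->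
  penrose 1 B (C *m P *m A) /\ penrose 2 B (C *m P *m A).
Proof.
move=> hM /ginv4P[p1 p2 p3 p4]; rewrite /=.
have hB : B = invmx A *m M *m invmx C by rewrite hM -!mulmxA mulKmx // mulmxV // mulmx1.
split.
  by rewrite hB !mulmxA mulmxKV // -(mulmxA _ A) mulmxV // mulmx1 -(mulmxA _ M P) -(mulmxA _ (M *m P)) p1.
by rewrite hB -!mulmxA mulKVmx // mulKmx // (mulmxA M P A) (mulmxA P (M *m P) A) (mulmxA P M P) p2.
Qed.

Lemma pen4_iff (M : 'M[R]_(m, n)) (P : 'M[R]_(n, m)) :
  M = A *m B *m C -> is_ginv [:: 1; 2; 3; 4]%N M P ->
  ctr (C *m P *m A *m B) = C *m P *m A *m B <-> colspace_eq (C *m ctr C *m ctr B) (ctr B).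
Proof.
move=> hM hP.
have hM' : ctr M = ctr C *m ctr B *m ctr A by rewrite hM !ctrM mulmxA.
have h := pen3_iff (ctr_unit Cu) (ctr_unit Au) hM' (ginv4_ctr hP).
have e : ctr B *m (ctr A *m ctr P *m ctr C) = ctr (C *m P *m A *m B).
  by rewrite !ctrM !mulmxA.
rewrite ctrK e ctrK in h; rewrite -h; split=> E.
  by rewrite E.
by rewrite -E.
Qed.

Lemma iii_lemma (M : 'M[R]_(m, n)) : M = A *m B *m C ->
  colspace_eq (A *m ctr A *m M) M <-> colspace_eq (ctr A *m A *m B) B.
Proof.
move=> hM.
have AA1 : A *m ctr A \in unitmx by rewrite unitmx_mul Au ctr_unit.
have AA2 : ctr A *m A \in unitmx by rewrite unitmx_mul Au ctr_unit.
rewrite !cs_iff_incl ?rank_unitl //; split.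
  case=> U hU; exists (C *m U *m invmx C); apply: (conj_eq Au Cu).
  rewrite hM !mulmxA in hU.
  by rewrite !mulmxA mulmxKV // hU.
case=> U hU; exists (invmx C *m U *m C).
by rewrite hM !mulmxA mulmxK // -(mulmxA A (ctr A) A) -(mulmxA A (ctr A *m A) B) hU !mulmxA.
Qed.
End Main2.

Theorem theorem4p2 (R : numClosedFieldType) (m n : nat)
  (A : 'M[R]_m) (B : 'M[R]_(m, n)) (C : 'M[R]_n) :
  (0 < m)%N -> (0 < n)%N -> A \in unitmx -> C \in unitmx ->
  let M := A *m B *m C in
  let R1 := colspace_eq (ctr A *m A *m B) B in
  let R2 := colspace_eq (C *m ctr C *m ctr B) (ctr B) in
  in_CBA [:: 1]%N A B C (mp_inv M) /\
      in_CBA [:: 1; 2]%N A B C (mp_inv M) /\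
      (in_CBA [:: 1; 3]%N A B C (mp_inv M) <-> R1) /\
      (in_CBA [:: 1; 4]%N A B C (mp_inv M) <-> R2) /\
      (in_CBA [:: 1; 2; 3]%N A B C (mp_inv M) <-> R1) /\
      (in_CBA [:: 1; 2; 4]%N A B C (mp_inv M) <-> R2) /\
      (in_CBA [:: 1; 3; 4]%N A B C (mp_inv M) <-> R1 /\ R2) /\
    [<-> mp_inv M = invmx C *m mp_inv B *m invmx A;
           R1 /\ R2;
           colspace_eq (A *m ctr A *m M) M /\ colspace_eq (ctr C *m C *m ctr M) (ctr M);
           (ctr A *m A *m B) *m mp_inv (ctr A *m A *m B) = B *m mp_inv B /\
             mp_inv (B *m C *m ctr C) *m (B *m C *m ctr C) = mp_inv B *m B;
           EP (ctr A *m A *m B *m ctr B) /\ EP (ctr B *m B *m C *m ctr C);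
           EP (A *m ctr A *m M *m ctr M) /\ EP (ctr M *m M *m ctr C *m C)].
Proof.
move=> _ _ Au Cu M R1 R2.
have hM : M = A *m B *m C by [].
clearbody M.
have hM' : ctr M = ctr C *m ctr B *m ctr A by rewrite hM !ctrM mulmxA.
have hP := mp_spec M.
have [pe1 pe2] := pen12 Au Cu hM hP.
have e3 : penrose 3 B (C *m mp_inv M *m A) <-> R1 := pen3_iff Au Cu hM hP.
have e4 : penrose 4 B (C *m mp_inv M *m A) <-> R2 := pen4_iff Au Cu hM hP.
have K : forall s, in_CBA s A B C (mp_inv M) <-> is_ginv s B (C *m mp_inv M *m A).
  by move=> s; apply: inCBA_iff.
have AA1 : A *m ctr A \in unitmx by rewrite unitmx_mul Au ctr_unit.
have AA2 : ctr A *m A \in unitmx by rewrite unitmx_mul Au ctr_unit.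
have CC1 : C *m ctr C \in unitmx by rewrite unitmx_mul Cu ctr_unit.
have CC2 : ctr C *m C \in unitmx by rewrite unitmx_mul Cu ctr_unit.
split; first by apply/K; do !(apply/ginv_cons; split) => //; exact: ginv_nil.
split; first by apply/K; do !(apply/ginv_cons; split) => //; exact: ginv_nil.
split.
  split; first by case/K/ginv_cons=> _ /ginv_cons[/e3].
  by move/e3=> h; apply/K; do !(apply/ginv_cons; split) => //; exact: ginv_nil.
split.
  split; first by case/K/ginv_cons=> _ /ginv_cons[/e4].
  by move/e4=> h; apply/K; do !(apply/ginv_cons; split) => //; exact: ginv_nil.
split.
  split; first by case/K/ginv_cons=> _ /ginv_cons[_ /ginv_cons[/e3]].
  by move/e3=> h; apply/K; do !(apply/ginv_cons; split) => //; exact: ginv_nil.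
split.
  split; first by case/K/ginv_cons=> _ /ginv_cons[_ /ginv_cons[/e4]].
  by move/e4=> h; apply/K; do !(apply/ginv_cons; split) => //; exact: ginv_nil.
split.
  split; first by case/K/ginv_cons=> _ /ginv_cons[/e3 ? /ginv_cons[/e4]].
  by case=> /e3 h /e4 h'; apply/K; do !(apply/ginv_cons; split) => //; exact: ginv_nil.
have iiiC := iii_lemma (ctr_unit Cu) (ctr_unit Au) hM'.
rewrite !ctrK in iiiC.
have iiiA := iii_lemma Au Cu hM.
have f0 : mp_inv M = invmx C *m mp_inv B *m invmx A <-> R1 /\ R2.
  split.
    move=> E; have G : C *m mp_inv M *m A = mp_inv B.
      by rewrite E -!mulmxA mulKVmx // mulmxA mulmxKV.
    by case/ginv4P: (mp_spec B); rewrite -G => _ _ /e3 ? /e4.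
  case=> /e3 h /e4 h'.
  have g4 : is_ginv [:: 1; 2; 3; 4]%N B (C *m mp_inv M *m A).
    by do !(apply/ginv_cons; split) => //; exact: ginv_nil.
  by rewrite -(mp_uniq g4) -PGE.
have f2 : colspace_eq (A *m ctr A *m M) M /\ colspace_eq (ctr C *m C *m ctr M) (ctr M)
    <-> R1 /\ R2.
  by split; case=> /iiiA h /iiiC h'.
have f3 : (ctr A *m A *m B) *m mp_inv (ctr A *m A *m B) = B *m mp_inv B /\
             mp_inv (B *m C *m ctr C) *m (B *m C *m ctr C) = mp_inv B *m B
    <-> R1 /\ R2.
  have h2 := proj_right (B *m C *m ctr C) B.
  have e : ctr (B *m C *m ctr C) = C *m ctr C *m ctr B by rewrite !ctrM ctrK mulmxA.
  rewrite e in h2.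
  by split; case=> /proj_left h /h2 h'.
have f5 : EP (ctr A *m A *m B *m ctr B) /\ EP (ctr B *m B *m C *m ctr C) <-> R1 /\ R2.
  have h1 := EP_lemma B AA2.
  have h2 := EP_lemma (ctr B) CC1; rewrite ctrK in h2.
  have h3 := EP_ctr (ctr B *m B *m C *m ctr C).
  rewrite !ctrM !ctrK !mulmxA in h3.
  split; first by case=> /h1 ? /h3/h2 ?.
  by case=> ? ?; split; [apply/h1 | apply/h3/h2].
have f6 : EP (A *m ctr A *m M *m ctr M) /\ EP (ctr M *m M *m ctr C *m C) <-> R1 /\ R2.
  have h1 := EP_lemma M AA1.
  have h2 := EP_lemma (ctr M) CC2; rewrite ctrK in h2.
  have h3 := EP_ctr (ctr M *m M *m ctr C *m C).
  rewrite !ctrM !ctrK !mulmxA in h3.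
  split; first by case=> /h1/iiiA ? /h3/h2/iiiC ?.
  by case=> ? ?; split; [apply/h1/iiiA | apply/h3/h2/iiiC].
tfae.
- by move/f0.
- by move/f2.
- by move/f2/f3.
- by move/f3/f5.
- by move/f5/f6.
- by move/f6/f0.
Qed.
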